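(* Let $X$ be a self-dense (no isolated points) compact metric space and let $f\colon X\to X$ be an inner-distal, totally transitive homeomorphism. Then the set $\operatorname{Per}(f)$ of periodic points of $f$ has empty interior.
   Context: The proximal cell of $x$ is $\mathcal{P}(x)=\{y\in X\colon \inf_{n\in\mathbb{Z}} d(f^n(x),f^n(y))=0\}$; $f$ is inner-distal if $\operatorname{Int}\mathcal{P}(x)=\emptyset$ for all $x$. A homeomorphism $g$ is transitive if some orbit $\{g^n(x)\colon n\in\mathbb{Z}\}$ is dense; $f$ is totally transitive if $f^n$ is transitive for every integer $n\ge1$. $\operatorname{Per}(f)=\{p\colon f^n(p)=p$ for some integer $n\ge1\}$. *)

(* Defs.v *)
From Stdlib Require Import Reals ZArith Classical.
Open Scope R_scope.

Record is_metric {X : Type} (d : X -> X -> R) : Prop := {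
  metric_nonneg : forall x y, 0 <= d x y;
  metric_eq0 : forall x y, d x y = 0 <-> x = y;
  metric_sym : forall x y, d x y = d y x;
  metric_tri : forall x y z, d x z <= d x y + d y z
}.

Definition dball {X : Type} (d : X -> X -> R) (x : X) (r : R) : X -> Prop :=
  fun y => d x y < r.

Definition d_open {X : Type} (d : X -> X -> R) (U : X -> Prop) : Prop :=
  forall x, U x -> exists r, 0 < r /\ forall y, dball d x r y -> U y.

Definition compact_space {X : Type} (d : X -> X -> R) : Prop :=
  forall (I : Type) (U : I -> X -> Prop),
    (forall i, d_open d (U i)) -> (forall x, exists i, U i x) ->
    exists l : list I, forall x, exists i, List.In i l /\ U i x.

Definition self_dense {X : Type} (d : X -> X -> R) : Prop :=
  forall x r, 0 < r -> exists y, y <> x /\ d x y < r.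

Definition continuous_map {X : Type} (d : X -> X -> R) (f : X -> X) : Prop :=
  forall x eps, 0 < eps -> exists delta, 0 < delta /\
    forall y, d x y < delta -> d (f x) (f y) < eps.

Definition homeomorphism {X : Type} (d : X -> X -> R) (f g : X -> X) : Prop :=
  continuous_map d f /\ continuous_map d g /\
  (forall x, g (f x) = x) /\ (forall x, f (g x) = x).

Fixpoint iter {X : Type} (n : nat) (h : X -> X) (x : X) : X :=
  match n with O => x | S k => h (iter k h x) end.

Definition zpow {X : Type} (f g : X -> X) (n : Z) (x : X) : X :=
  match n with
  | Z0 => x
  | Zpos p => iter (Pos.to_nat p) f x
  | Zneg p => iter (Pos.to_nat p) g x
  end.

Definition int_set {X : Type} (d : X -> X -> R) (A : X -> Prop) : X -> Prop :=
  fun x => exists r, 0 < r /\ forall y, dball d x r y -> A y.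

(* proximal cell: inf_{n in Z} d(f^n x, f^n y) = 0, i.e. the (nonnegative)
   values get arbitrarily small *)
Definition proximal_cell {X : Type} (d : X -> X -> R) (f g : X -> X) (x : X)
  : X -> Prop :=
  fun y => forall eps, 0 < eps -> exists n : Z, d (zpow f g n x) (zpow f g n y) < eps.

Definition inner_distal {X : Type} (d : X -> X -> R) (f g : X -> X) : Prop :=
  forall x z, ~ int_set d (proximal_cell d f g x) z.

Definition transitive {X : Type} (d : X -> X -> R) (h hi : X -> X) : Prop :=
  exists x, forall y eps, 0 < eps -> exists n : Z, d y (zpow h hi n x) < eps.

Definition totally_transitive {X : Type} (d : X -> X -> R) (f g : X -> X) : Prop :=
  forall n : nat, (1 <= n)%nat -> transitive d (iter n f) (iter n g).

Definition Per {X : Type} (f : X -> X) : X -> Prop :=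
  fun p => exists n : nat, (1 <= n)%nat /\ iter n f p = p.

(* Main.v *)
Require Import Defs.
From Stdlib Require Import Reals ZArith Lra Lia Classical.
Open Scope R_scope.

Lemma iter1_eq {X : Type} (f : X -> X) k x : Defs.iter k (Defs.iter 1 f) x = Defs.iter k f x.
Proof. induction k; simpl in *; [reflexivity|rewrite IHk; reflexivity]. Qed.

Lemma zpow1_eq {X : Type} (f g : X -> X) n x :
  zpow (Defs.iter 1 f) (Defs.iter 1 g) n x = zpow f g n x.
Proof. destruct n; simpl; auto; apply iter1_eq. Qed.

Lemma iter_S' {X : Type} (h : X -> X) k x : Defs.iter (S k) h x = Defs.iter k h (h x).
Proof. induction k; simpl; auto. simpl in IHk. rewrite IHk; reflexivity. Qed.

Lemma iter_inv {X : Type} (f g : X -> X) (H : forall x, g (f x) = x) k x :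
  Defs.iter k g (Defs.iter k f x) = x.
Proof.
  revert x; induction k; intro x; [reflexivity|].
  rewrite (iter_S' g k). change (Defs.iter k g (g (f (Defs.iter k f x))) = x).
  rewrite H. apply IHk.
Qed.

Lemma iter_closed {X : Type} (h : X -> X) (Q : X -> Prop)
  (Hc : forall u, Q u -> Q (h u)) k u : Q u -> Q (Defs.iter k h u).
Proof. induction k; simpl; auto. Qed.

Theorem theorem2p19 (X : Type) (d : X -> X -> R) (f g : X -> X) :
  is_metric d -> compact_space d -> self_dense d ->
  homeomorphism d f g -> inner_distal d f g -> totally_transitive d f g ->
  forall x, ~ int_set d (Per f) x.
Proof.
  intros Hm _ Hsd [_ [_ [Hgf Hfg]]] _ Htt x [r [Hr Hint]].
  destruct (Htt 1%nat (le_n 1)) as [z Hz].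
  destruct (Hz x r Hr) as [n Hn].
  rewrite zpow1_eq in Hn.
  set (w := zpow f g n z) in *.
  destruct (Hint w Hn) as [p [Hp Hpw]].
  set (Q := fun u => exists j, (j < p)%nat /\ u = Defs.iter j f w).
  assert (Qw : Q w) by (exists 0%nat; split; [lia | reflexivity]).
  assert (Qf : forall u, Q u -> Q (f u)).
  { intros u [j [Hj ->]].
    destruct (Nat.eq_dec (S j) p) as [E|E].
    - exists 0%nat; split; [lia|]. simpl. change (f (Defs.iter j f w)) with (Defs.iter (S j) f w).
      rewrite E; exact Hpw.
    - exists (S j); split; [lia|reflexivity]. }
  assert (Qg : forall u, Q u -> Q (g u)).
  { intros u [j [Hj ->]].
    destruct j as [|j].
    - exists (p - 1)%nat; split; [lia|]. simpl.
      rewrite <- Hpw at 1. destruct p as [|p']; [lia|].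
      simpl. rewrite Hgf. f_equal. lia.
    - exists j; split; [lia|]. simpl. apply Hgf. }
  assert (Qz : Q z).
  { destruct n as [|k|k]; simpl in w.
    - exact Qw.
    - rewrite <- (iter_inv f g Hgf (Pos.to_nat k) z).
      apply iter_closed; auto.
    - rewrite <- (iter_inv g f Hfg (Pos.to_nat k) z).
      apply iter_closed; auto. }
  assert (Qall : forall m, Q (zpow f g m z)).
  { intros [|k|k]; simpl; auto; apply iter_closed; auto. }
  assert (Hden : forall y eps, 0 < eps -> exists j, (j < p)%nat /\ d y (Defs.iter j f w) < eps).
  { intros y eps He. destruct (Hz y eps He) as [m Hm'].
    rewrite zpow1_eq in Hm'. destruct (Qall m) as [j [Hj Ej]].
    exists j; split; auto. rewrite <- Ej; auto. }
  destruct Hm as [Hnn Heq Hsym Htri].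
  assert (Hdel : forall q, exists del, 0 < del /\ forall j, (j < q)%nat ->
     Defs.iter j f w = w \/ del <= d w (Defs.iter j f w)).
  { induction q as [|q [del [Hd Hq]]].
    - exists 1; split; [lra|]. intros; lia.
    - destruct (classic (Defs.iter q f w = w)) as [E|E].
      + exists del; split; auto. intros j Hj.
        destruct (Nat.eq_dec j q) as [->|Ne]; [left; auto|]. apply Hq; lia.
      + assert (0 < d w (Defs.iter q f w)).
        { destruct (Rle_lt_or_eq_dec _ _ (Hnn w (Defs.iter q f w))) as [L|L]; auto.
          exfalso; apply E; symmetry; apply Heq; auto. }
        exists (Rmin del (d w (Defs.iter q f w))); split.
        * apply Rmin_pos; auto.
        * intros j Hj. destruct (Nat.eq_dec j q) as [->|Ne].
          -- right; apply Rmin_r.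
          -- destruct (Hq j ltac:(lia)) as [L|L]; [left; auto|right].
             eapply Rle_trans; [apply Rmin_l|exact L]. }
  destruct (Hdel p) as [del [Hd Hq]].
  destruct (Hsd w (del / 2) ltac:(lra)) as [y [Hyw Hy]].
  assert (Pwy : 0 < d w y).
  { destruct (Rle_lt_or_eq_dec _ _ (Hnn w y)) as [L|L]; auto.
    exfalso; apply Hyw; symmetry; apply Heq; auto. }
  assert (Hd2 : 0 < del/2) by lra.
  destruct (Hden y (Rmin (del/2) (d w y)) (Rmin_pos _ _ Hd2 Pwy)) as [j [Hj Hdj]].
  pose proof (Rmin_l (del/2) (d w y)). pose proof (Rmin_r (del/2) (d w y)).
  destruct (Hq j Hj) as [E|E].
  - rewrite E in Hdj. rewrite Hsym in Hdj. lra.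
  - pose proof (Htri w y (Defs.iter j f w)). lra.
Qed.
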